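(* Let $\mathsf{A}\in\mathcal{O}(\Omega,\mathcal{H})$ be a POVM and $\mathcal{J}\in\mathrm{Ins}(\Lambda,\mathcal{H},\mathcal{V})$ an instrument. If $\mathsf{A}$ does not disturb $\mathcal{J}$, then $\mathsf{A}$ and $\mathcal{J}$ are compatible. Furthermore, if $\mathsf{A}$ is sharp, then the converse also holds: if $\mathsf{A}$ and $\mathcal{J}$ are compatible then $\mathsf{A}$ does not disturb $\mathcal{J}$.
   Context: All Hilbert spaces are finite-dimensional and complex, and all outcome sets are finite. A POVM $\mathsf{A}\in\mathcal{O}(\Omega,\mathcal{H})$ is a map $x\mapsto \mathsf{A}(x)$ from $\Omega$ to positive operators on $\mathcal{H}$ with $\sum_x \mathsf{A}(x)=I$; it is sharp if $\mathsf{A}(x)^2=\mathsf{A}(x)$ for all $x$. An instrument $\mathcal{I}\in\mathrm{Ins}(\Omega,\mathcal{H},\mathcal{K})$ is a family $(\mathcal{I}_x)_{x\in\Omega}$ of completely positive trace-nonincreasing linear maps $\mathcal{L}(\mathcal{H})\to\mathcal{L}(\mathcal{K})$ such that $\Phi^{\mathcal{I}}:=\sum_x\mathcal{I}_x$ is trace preserving; its induced POVM $\mathsf{A}^{\mathcal{I}}$ is defined by $\mathrm{tr}[\mathsf{A}^{\mathcal{I}}(x)\varrho]=\mathrm{tr}[\mathcal{I}_x(\varrho)]$; $\mathrm{Ins}(\Omega,\mathcal{H}):=\mathrm{Ins}(\Omega,\mathcal{H},\mathcal{H})$. An instrument $\mathcal{I}\in\mathrm{Ins}(\Omega,\mathcal{H})$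 does not disturb $\mathcal{J}\in\mathrm{Ins}(\Lambda,\mathcal{H},\mathcal{V})$ if $\mathcal{J}_y\circ\Phi^{\mathcal{I}}=\mathcal{J}_y$ for all $y\in\Lambda$. A POVM $\mathsf{A}\in\mathcal{O}(\Omega,\mathcal{H})$ does not disturb $\mathcal{J}$ if there exists $\mathcal{I}\in\mathrm{Ins}(\Omega,\mathcal{H})$ with $\mathsf{A}^{\mathcal{I}}=\mathsf{A}$ that does not disturb $\mathcal{J}$. A POVM $\mathsf{A}\in\mathcal{O}(\Omega,\mathcal{H})$ and an instrument $\mathcal{J}\in\mathrm{Ins}(\Lambda,\mathcal{H},\mathcal{V})$ are compatible if there exists $\mathcal{G}\in\mathrm{Ins}(\Omega\times\Lambda,\mathcal{H},\mathcal{V})$ with $\sum_{x}\mathcal{G}_{(x,y)}=\mathcal{J}_y$ for all $y$ and $\sum_y\mathsf{A}^{\mathcal{G}}(x,y)=\mathsf{A}(x)$ for all $x$. *)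

(* Defs.v *)
(* Finite-dimensional quantum measurement theory.
   Scalars: an arbitrary numeric closed field C (e.g. the complex numbers);
   a Hilbert space of dimension n is C^n, operators are 'M[C]_n. *)
From HB Require Import structures.
From mathcomp Require Import all_boot all_order all_algebra.
Set Implicit Arguments. Unset Strict Implicit. Unset Printing Implicit Defensive.
Import Order.TTheory GRing.Theory Num.Theory.
Local Open Scope ring_scope.

Section QDefs.
Variable C : numClosedFieldType.

Definition adjmx m n (A : 'M[C]_(m, n)) : 'M[C]_(n, m) := (map_mx Num.conj A)^T.

Definition psd n (A : 'M[C]_n) : Prop :=
  forall v : 'cV[C]_n, 0 <= (adjmx v *m A *m v) 0 0.

Definition linmap n m := {linear 'M[C]_n -> 'M[C]_m}.

(* complete positivity: id_k (x) Phi is positive for every k, where an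
   operator on C^k (x) C^n is a k x k block matrix of n x n blocks *)
Definition cp n m (Phi : linmap n m) : Prop :=
  forall (k : nat) (X : 'I_k -> 'I_k -> 'M[C]_n),
    psd (\mxblock_(i < k, j < k) X i j) ->
    psd (\mxblock_(i < k, j < k) Phi (X i j)).

Definition trace_nonincreasing n m (Phi : linmap n m) : Prop :=
  forall rho : 'M[C]_n, psd rho -> \tr (Phi rho) <= \tr rho.

Definition trace_preserving n m (Phi : 'M[C]_n -> 'M[C]_m) : Prop :=
  forall rho : 'M[C]_n, \tr (Phi rho) = \tr rho.

Definition is_povm (Omega : finType) n (A : Omega -> 'M[C]_n) : Prop :=
  (forall x, psd (A x)) /\ \sum_(x : Omega) A x = 1%:M.

Definition sharp (Omega : finType) n (A : Omega -> 'M[C]_n) : Prop :=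
  forall x, A x *m A x = A x.

Definition total_map (Omega : finType) n m (I : Omega -> linmap n m)
  (rho : 'M[C]_n) : 'M[C]_m := \sum_(x : Omega) I x rho.

Definition is_instrument (Omega : finType) n m (I : Omega -> linmap n m) : Prop :=
  (forall x, cp (I x)) /\ (forall x, trace_nonincreasing (I x)) /\
  trace_preserving (total_map I).

(* induced POVM: the unique A^I with tr[A^I(x) rho] = tr[I_x(rho)] for all rho;
   explicitly A^I(x)_{ij} = tr[I_x(E_{ji})]. *)
Definition induced_povm (Omega : finType) n m (I : Omega -> linmap n m)
  (x : Omega) : 'M[C]_n :=
  \matrix_(i, j) \tr (I x (delta_mx j i)).

Definition instr_not_disturb (Omega Lambda : finType) n v
  (I : Omega -> linmap n n) (J : Lambda -> linmap n v) : Prop :=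
  forall y rho, J y (total_map I rho) = J y rho.

Definition povm_not_disturb (Omega Lambda : finType) n v
  (A : Omega -> 'M[C]_n) (J : Lambda -> linmap n v) : Prop :=
  exists I : Omega -> linmap n n,
    [/\ is_instrument I, induced_povm I = A & instr_not_disturb I J].

Definition compatible (Omega Lambda : finType) n v
  (A : Omega -> 'M[C]_n) (J : Lambda -> linmap n v) : Prop :=
  exists G : Omega * Lambda -> linmap n v,
    [/\ is_instrument G,
        forall y rho, \sum_(x : Omega) G (x, y) rho = J y rho &
        forall x, \sum_(y : Lambda) induced_povm G (x, y) = A x].

End QDefs.

(* Main.v *)
Require Import Defs.
From HB Require Import structures.
From mathcomp Require Import all_boot all_order all_algebra.
From Stdlib Require Import FunctionalExtensionality.
Set Implicit Arguments. Unset Strict Implicit. Unset Printing Implicit Defensive.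
Import Order.TTheory GRing.Theory Num.Theory.
Local Open Scope ring_scope.

Section H.
Variable C : numClosedFieldType.

Lemma aux_real (c r : C) : 0 <= c ->
  (forall s : C, s \is Num.real -> 0 <= c + s * r) -> r = 0.
Proof.
move=> c0 h; have r1 := h 1 (rpred1 _); rewrite mul1r in r1.
have rr : r \is Num.real by rewrite -(addKr c r) rpredD ?rpredN ?ger0_real.
apply/eqP; apply/negP => /negP rn0.
have hr : (- (c + 1) / r) \is Num.real.
  by rewrite rpredM ?rpredV // rpredN rpredD ?rpred1 ?ger0_real.
have := h _ hr.
by rewrite -mulrA mulVf // mulr1 opprD addrA subrr sub0r oppr_ge0 ler10.
Qed.

Lemma aux_lin (c a b : C) : (forall t, 0 <= c + t^* * a + t * b) -> a = 0 /\ b = 0.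
Proof.
move=> h; have c0 : 0 <= c by have := h 0; rewrite rmorph0 !mul0r !addr0.
have e1 : a + b = 0.
  apply: (aux_real c0) => s sr; have := h s.
  by rewrite conj_Creal // -addrA -mulrDr.
have e2 : 'i * (b - a) = 0.
  apply: (aux_real c0) => s sr; have := h ('i * s).
  rewrite rmorphM /= conjCi conj_Creal // -addrA.
  congr (0 <= c + _); rewrite mulrBr mulrDr mulrN !mulNr !mulrA [s * 'i]mulrC addrC //.
have : b = a by apply/eqP; rewrite -subr_eq0; move/eqP: e2; rewrite mulf_eq0 (negbTE (neq0Ci _)).
move=> eba; rewrite eba in e1 *.
have : a *+ 2 == 0 by rewrite mulr2n e1.
by rewrite mulrn_eq0 /= => /eqP.
Qed.

Lemma adjmxK m n (A : 'M[C]_(m,n)) : adjmx (adjmx A) = A.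
Proof. by apply/matrixP=> i j; rewrite !mxE conjCK. Qed.

Lemma adjmxM m n p (A : 'M[C]_(m,n)) (B : 'M[C]_(n,p)) :
  adjmx (A *m B) = adjmx B *m adjmx A.
Proof. by rewrite /adjmx map_mxM trmx_mul. Qed.

Lemma adjmxD m n (A B : 'M[C]_(m,n)) : adjmx (A + B) = adjmx A + adjmx B.
Proof. by rewrite /adjmx map_mxD linearD. Qed.

Lemma adjmxZ m n a (A : 'M[C]_(m,n)) : adjmx (a *: A) = a^* *: adjmx A.
Proof. by apply/matrixP=> i j; rewrite !mxE rmorphM. Qed.

Lemma adjmxN m n (A : 'M[C]_(m,n)) : adjmx (- A) = - adjmx A.
Proof. by apply/matrixP=> i j; rewrite !mxE rmorphN. Qed.

Lemma adjmx_delta m n (i : 'I_m) (j : 'I_n) : adjmx (delta_mx i j : 'M[C]_(m,n)) = delta_mx j i.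
Proof. by apply/matrixP=> a b; rewrite !mxE; case: (_ == _); case: (_ == _); rewrite /= ?rmorph1 ?rmorph0. Qed.

Definition ev n (i : 'I_n) : 'cV[C]_n := delta_mx i 0.
Definition bil n (M : 'M[C]_n) (z w : 'cV[C]_n) : C := (adjmx z *m M *m w) 0 0.

Lemma bil_e n (M : 'M[C]_n) i j : bil M (ev i) (ev j) = M i j.
Proof. by rewrite /bil /ev adjmx_delta -rowE -colE !mxE. Qed.

Lemma bilDl n (M : 'M[C]_n) z1 z2 w : bil M (z1 + z2) w = bil M z1 w + bil M z2 w.
Proof. by rewrite /bil adjmxD !mulmxDl mxE. Qed.
Lemma bilDr n (M : 'M[C]_n) z w1 w2 : bil M z (w1 + w2) = bil M z w1 + bil M z w2.
Proof. by rewrite /bil !mulmxDr mxE. Qed.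
Lemma bilZl n (M : 'M[C]_n) a z w : bil M (a *: z) w = a^* * bil M z w.
Proof. by rewrite /bil adjmxZ -!scalemxAl mxE. Qed.
Lemma bilZr n (M : 'M[C]_n) a z w : bil M z (a *: w) = a * bil M z w.
Proof. by rewrite /bil -scalemxAr mxE. Qed.
Lemma bilDM n (M N : 'M[C]_n) z w : bil (M + N) z w = bil M z w + bil N z w.
Proof. by rewrite /bil mulmxDr mulmxDl mxE. Qed.
Lemma bilZM n (M : 'M[C]_n) a z w : bil (a *: M) z w = a * bil M z w.
Proof. by rewrite /bil -scalemxAr -scalemxAl mxE. Qed.

Lemma quad_e2 n (M : 'M[C]_n) i j t :
  bil M (ev i + t *: ev j) (ev i + t *: ev j) =
  M i i + t^* * M j i + t * M i j + t^* * (t * M j j).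
Proof.
rewrite !(bilDl, bilDr, bilZl, bilZr, bil_e).
by rewrite -!addrA; congr (_ + _); rewrite addrC -addrA; congr (_ + _); rewrite addrC.
Qed.

Lemma diag0_psd n (M : 'M[C]_n) : (forall i, M i i = 0) ->
  (forall z, 0 <= bil M z z) -> M = 0.
Proof.
move=> d0 pM; apply/matrixP=> i j; rewrite mxE.
have := @aux_lin 0 (M j i) (M i j) => -[t|//].
by have := pM (ev i + t *: ev j); rewrite quad_e2 !d0 mulr0 mulr0 addr0 add0r.
Qed.

Lemma polar n (N : 'M[C]_n) : (forall z, bil N z z = 0) -> N = 0.
Proof.
move=> h; apply: diag0_psd => [i|z]; last by rewrite h.
by rewrite -bil_e h.
Qed.
Lemma psd_kraus n m (K : 'M[C]_(m,n)) Y : psd Y -> psd (K *m Y *m adjmx K).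
Proof.
move=> pY v; have := pY (adjmx K *m v).
by rewrite adjmxM adjmxK !mulmxA.
Qed.

Lemma psd_cast n n' (e1 e2 : n = n') (M : 'M[C]_n) : psd M -> psd (castmx (e1, e2) M).
Proof.
case: n' / e1 e2 => e2; rewrite (eq_irrelevance e2 erefl) castmx_id //.
Qed.

Lemma psd_castV n n' (e1 e2 : n = n') (M : 'M[C]_n) : psd (castmx (e1, e2) M) -> psd M.
Proof.
case: n' / e1 e2 => e2; rewrite (eq_irrelevance e2 erefl) castmx_id //.
Qed.

Lemma psd_block1 n (X : 'M[C]_n) : psd X <-> psd (\mxblock_(i < 1, j < 1) X).
Proof.
have hX := mxEmxblock X.
split=> h; first by move: h; rewrite {1}hX; apply: psd_castV.
by rewrite hX; apply: psd_cast.
Qed.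

Lemma cp_pos n m (Phi : linmap C n m) X : cp Phi -> psd X -> psd (Phi X).
Proof.
move=> cPhi /psd_block1 pX.
by apply/psd_block1; apply: (cPhi 1%N (fun _ _ => X)).
Qed.

Definition kraus n m (K : 'M[C]_(m,n)) (X : 'M[C]_n) : 'M[C]_m := K *m X *m adjmx K.
Fact kraus_semilinear n m (K : 'M[C]_(m,n)) : semilinear (kraus K).
Proof. split=> [a A|A B] /=; rewrite /kraus. by rewrite -scalemxAr !scalemxAl. by rewrite mulmxDr mulmxDl. Qed.
HB.instance Definition _ n m (K : 'M[C]_(m,n)) :=
  GRing.isSemilinear.Build C 'M[C]_n 'M[C]_m _ (kraus K) (kraus_semilinear K).

Lemma adjmx_mxdiag k n (K : 'I_k -> 'M[C]_n) :
  adjmx (\mxdiag_(i < k) K i) = \mxdiag_(i < k) adjmx (K i).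
Proof.
apply/matrixP=> s t; rewrite !mxE eq_sym.
case: eqP => [e|_]; last by rewrite !(mxE, raddf0) ?rmorph0.
by rewrite !conform_mx_id e !mxE.
Qed.

Lemma cp_kraus n (K : 'M[C]_n) : cp (kraus K : linmap C n n).
Proof.
move=> k X pX.
have -> : \mxblock_(i < k, j < k) (kraus K : linmap C n n) (X i j) =
  \mxdiag_(i < k) K *m \mxblock_(i < k, j < k) X i j *m adjmx (\mxdiag_(i < k) K).
  by rewrite adjmx_mxdiag mul_mxdiag_mxblock mul_mxblock_mxdiag.
exact: psd_kraus.
Qed.

Lemma psdE n (M : 'M[C]_n) : psd M <-> forall z, 0 <= bil M z z.
Proof. by []. Qed.

Lemma bilNM n (M : 'M[C]_n) z w : bil (- M) z w = - bil M z w.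
Proof. by rewrite /bil mulmxN mulNmx mxE. Qed.

Lemma bilBM n (M N : 'M[C]_n) z w : bil (M - N) z w = bil M z w - bil N z w.
Proof. by rewrite bilDM bilNM. Qed.

Lemma bil_sumM n (I : finType) (P : pred I) (F : I -> 'M[C]_n) z w :
  bil (\sum_(i | P i) F i) z w = \sum_(i | P i) bil (F i) z w.
Proof.
rewrite /bil mulmx_sumr mulmx_suml summxE; apply: eq_bigr => i _; by [].
Qed.

Lemma bil0M n (z w : 'cV[C]_n) : bil 0 z w = 0.
Proof. by rewrite /bil mulmx0 mul0mx mxE. Qed.

Lemma bil_adj n (M : 'M[C]_n) z w : bil (adjmx M) z w = (bil M w z)^*.
Proof.
rewrite /bil; have -> : adjmx z *m adjmx M *m w = adjmx (adjmx w *m M *m z) by rewrite !adjmxM adjmxK mulmxA.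
by rewrite /adjmx !mxE.
Qed.

Lemma psd_herm n (M : 'M[C]_n) : psd M -> adjmx M = M.
Proof.
move=> pM; apply/eqP; rewrite -subr_eq0; apply/eqP; apply: polar => z.
by rewrite bilBM bil_adj (conj_Creal (ger0_real (pM z))) subrr.
Qed.

Lemma tr_bil n (M : 'M[C]_n) : \tr M = \sum_i bil M (ev i) (ev i).
Proof. by apply: eq_bigr => i _; rewrite bil_e. Qed.

Lemma psd_tr_ge0 n (M : 'M[C]_n) : psd M -> 0 <= \tr M.
Proof. by move=> pM; rewrite tr_bil; apply: sumr_ge0 => i _; apply: pM. Qed.

Lemma psd_tr0 n (M : 'M[C]_n) : psd M -> \tr M = 0 -> M = 0.
Proof.
move=> pM; rewrite tr_bil => /eqP; rewrite psumr_eq0 => [/allP h|i _]; last exact: pM.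
apply: diag0_psd pM => i; rewrite -bil_e; apply/eqP; apply: h.
by rewrite mem_index_enum.
Qed.

Lemma psdD n (A B : 'M[C]_n) : psd A -> psd B -> psd (A + B).
Proof. move=> pA pB z; change (0 <= bil (A + B) z z); rewrite bilDM; exact: addr_ge0 (pA z) (pB z). Qed.

Lemma psd_sum n (I : finType) (P : pred I) (F : I -> 'M[C]_n) :
  (forall i, P i -> psd (F i)) -> psd (\sum_(i | P i) F i).
Proof.
move=> h; elim/big_ind: _ => //; first by move=> z; change (0 <= bil 0 z z); rewrite bil0M.
exact: psdD.
Qed.

Lemma normsq_ge0 n (w : 'cV[C]_n) : 0 <= (adjmx w *m w) 0 0.
Proof.
rewrite mxE sumr_ge0 // => k _; rewrite !mxE mulrC; exact: mul_conjC_ge0.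
Qed.

Lemma normsq0 n (w : 'cV[C]_n) : (adjmx w *m w) 0 0 = 0 -> w = 0.
Proof.
rewrite mxE => /eqP; rewrite psumr_eq0 => [/allP h|k _]; last first.
  by rewrite !mxE mulrC mul_conjC_ge0.
apply/matrixP=> k l; rewrite [l]ord1 mxE.
have := h k (mem_index_enum _); rewrite !mxE mulrC mul_conjC_eq0.
by move/eqP.
Qed.

Lemma psd1 k : psd (1%:M : 'M[C]_k).
Proof. by move=> z; rewrite mulmx1 normsq_ge0. Qed.

Lemma psd_rank1 n m (w : 'M[C]_(n,m)) : psd (w *m adjmx w).
Proof. by have := psd_kraus w (@psd1 m); rewrite mulmx1. Qed.



Lemma tr_rank1 n (M : 'M[C]_n) (w : 'cV[C]_n) : \tr (M *m (w *m adjmx w)) = bil M w w.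
Proof. by rewrite mulmxA mxtrace_mulC mulmxA trace_mx11. Qed.

Lemma tr_induced (I : finType) n m (F : I -> linmap C n m) x (s : 'M[C]_n) :
  \tr (F x s) = \tr (induced_povm F x *m s).
Proof.
rewrite {1}[s]matrix_sum_delta !linear_sum /=.
under eq_bigr do rewrite !linear_sum /=.
under eq_bigr do under eq_bigr do rewrite !linearZ /=.
rewrite [RHS]/mxtrace [RHS](eq_bigr (fun i => \sum_k induced_povm F x i k * s k i)); last first.
  by move=> i _; rewrite mxE.
rewrite [RHS]exchange_big /=; apply: eq_bigr => i _; apply: eq_bigr => k _.
by rewrite mxE mulrC.
Qed.

Lemma expand_rank1 n (a b : 'cV[C]_n) t :
  (a + t *: b) *m adjmx (a + t *: b) =
  a *m adjmx a + t^* *: (a *m adjmx b) + t *: (b *m adjmx a) + (t * t^*) *: (b *m adjmx b).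
Proof.
rewrite adjmxD adjmxZ mulmxDl !mulmxDr -!scalemxAl -!scalemxAr scalerA.
by rewrite !addrA; congr (_ + _); rewrite -!addrA; congr (_ + _); rewrite addrC.
Qed.

Lemma cross n m (Phi : linmap C n m) (a b : 'cV[C]_n) : cp Phi ->
  Phi (b *m adjmx b) = 0 -> Phi (a *m adjmx b) = 0 /\ Phi (b *m adjmx a) = 0.
Proof.
move=> cPhi h0.
have key z : bil (Phi (a *m adjmx b)) z z = 0 /\ bil (Phi (b *m adjmx a)) z z = 0.
  apply: (@aux_lin (bil (Phi (a *m adjmx a)) z z)) => t.
  have : 0 <= bil (Phi ((a + t *: b) *m adjmx (a + t *: b))) z z := cp_pos cPhi (psd_rank1 (a + t *: b)) z.
  rewrite expand_rank1 !linearD !linearZ /= h0 !bilDM !bilZM bil0M mulr0 addr0.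
  by [].
by split; apply: polar => z; case: (key z).
Qed.

Lemma adjmx1 n : adjmx (1%:M : 'M[C]_n) = 1%:M.
Proof. by apply/matrixP=> i j; rewrite !mxE eq_sym; case: eqP; rewrite /= ?rmorph1 ?rmorph0. Qed.

Lemma delta_rank1 n (i j : 'I_n) : delta_mx i j = ev i *m adjmx (ev j) :> 'M[C]_n.
Proof. by rewrite /ev adjmx_delta mul_delta_mx. Qed.

Lemma lin_rank1 n m (Phi Psi : linmap C n m) :
  (forall u w : 'cV[C]_n, Phi (u *m adjmx w) = Psi (u *m adjmx w)) ->
  forall X, Phi X = Psi X.
Proof.
move=> h X; rewrite [X]matrix_sum_delta !linear_sum; apply: eq_bigr => i _.
rewrite !linear_sum; apply: eq_bigr => j _.
by rewrite !linearZ delta_rank1 h.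
Qed.

Lemma KL n m (Phi : linmap C n m) (B P : 'M[C]_n) : cp Phi ->
  (forall s, \tr (Phi s) = \tr (B *m s)) -> psd (P - B) ->
  adjmx P = P -> P *m P = P ->
  forall u w : 'cV[C]_n, Phi (u *m adjmx w) = Phi (P *m (u *m adjmx w) *m P).
Proof.
move=> cPhi hB hPB hP PP.
pose Q := 1%:M - P.
have hQ : adjmx Q = Q by rewrite /Q adjmxD adjmxN adjmx1 hP.
have QP : Q *m P = 0 by rewrite /Q mulmxBl mul1mx PP subrr.
have PQ : P *m Q = 0 by rewrite /Q mulmxBr mulmx1 PP subrr.
have zeroQ (u : 'cV[C]_n) : Phi ((Q *m u) *m adjmx (Q *m u)) = 0.
  have pPhi := cp_pos cPhi (psd_rank1 (Q *m u)).
  apply: psd_tr0 => //.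
  rewrite hB tr_rank1; apply/eqP; rewrite eq_le; apply/andP; split.
    have := hPB (Q *m u); rewrite -/(bil _ _ _) bilBM.
    have -> : bil P (Q *m u) (Q *m u) = 0.
      by rewrite /bil adjmxM hQ -(mulmxA (adjmx u)) QP mulmx0 mul0mx mxE.
    by rewrite sub0r oppr_ge0.
  by rewrite -tr_rank1 -hB; apply: psd_tr_ge0.
move=> u w.
have eu : u = P *m u + Q *m u by rewrite -mulmxDl /Q addrC subrK mul1mx.
have ew : w = P *m w + Q *m w by rewrite -mulmxDl /Q addrC subrK mul1mx.
have -> : P *m (u *m adjmx w) *m P = (P *m u) *m adjmx (P *m w).
  by rewrite adjmxM hP !mulmxA.
rewrite {1}eu {1}ew adjmxD mulmxDl !mulmxDr !linearD /=.
have [h1 _] := cross (P *m u) cPhi (zeroQ w).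
have [h2 h3] := cross (P *m w) cPhi (zeroQ u).
have [h4 _] := cross (Q *m u) cPhi (zeroQ w).
by rewrite h1 h3 h4 !addr0.
Qed.

Lemma bil_KK n (K : 'M[C]_n) z : bil (adjmx K *m K) z z = (adjmx (K *m z) *m (K *m z)) 0 0.
Proof. by rewrite /bil adjmxM !mulmxA. Qed.

Lemma sharp_orth (Omega : finType) n (A : Omega -> 'M[C]_n) :
  is_povm A -> sharp A -> forall x x', x' != x -> A x' *m A x = 0.
Proof.
move=> [pA sA] shA x x' nx.
have hA y : adjmx (A y) = A y := psd_herm (pA y).
pose K y := A y *m A x.
have hT y : A x *m A y *m A x = adjmx (K y) *m K y.
  by rewrite /K adjmxM !hA -!mulmxA [A y *m (A y *m _)]mulmxA shA.
have hsum : \sum_(y | y != x) adjmx (K y) *m K y = 0.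
  have E : \sum_(y | y != x) A x *m A y *m A x = 0.
    have : A x *m (\sum_y A y) *m A x = A x by rewrite sA mulmx1 shA.
    rewrite mulmx_sumr mulmx_suml (bigD1 x) //= shA shA.
    by move=> H; have := congr1 (fun M => M - A x) H; rewrite addrC addrK subrr.
  by rewrite -[RHS]E; apply: eq_bigr => y _; rewrite hT.
have Kz (z : 'cV[C]_n) : K x' *m z = 0.
  apply: normsq0.
  have := congr1 (fun M => bil M z z) hsum; rewrite /= bil0M bil_sumM.
  move/eqP; rewrite psumr_eq0 => [/allP h|y _]; last by rewrite bil_KK normsq_ge0.
  have := h x' (mem_index_enum _); rewrite nx /= => /eqP.
  by rewrite bil_KK.
apply/matrixP=> i j; have := congr1 (fun M : 'cV[C]_n => M i 0) (Kz (ev j)).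
by rewrite /= /ev -colE !mxE.
Qed.

Lemma tr_delta n (M : 'M[C]_n) i j : \tr (M *m delta_mx j i) = M i j.
Proof.
by rewrite delta_rank1 mulmxA mxtrace_mulC mulmxA trace_mx11 -/(bil _ _ _) bil_e.
Qed.

Lemma induced_psd (I : finType) n m (F : I -> linmap C n m) x :
  cp (F x) -> psd (induced_povm F x).
Proof.
move=> cF z; rewrite -/(bil _ z z) -tr_rank1 -tr_induced.
exact/psd_tr_ge0/(cp_pos cF)/psd_rank1.
Qed.
End H.

Theorem proposition4 (C : numClosedFieldType) (Omega Lambda : finType) (n v : nat)
  (A : Omega -> 'M[C]_n) (J : Lambda -> linmap C n v) :
  is_povm A -> is_instrument J ->
  (povm_not_disturb A J -> compatible A J) /\
  (sharp A -> compatible A J -> povm_not_disturb A J).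
Proof.
move=> povmA [cpJ [tniJ tpJ]]; split.
  case=> I [[cpI [tniI tpI]] indI nd].
  exists (fun p => (J p.2 \o I p.1 : linmap C n v)); split.
  - split; [|split].
    + move=> [x y] k X pX /=.
      exact: (cpJ y k (fun i j => I x (X i j)) (cpI x k X pX)).
    + move=> [x y] rho prho /=.
      exact: le_trans (tniJ y _ (cp_pos (cpI x) prho)) (tniI x _ prho).
    + move=> rho; rewrite /total_map -(pair_big xpredT xpredT (fun x y => J y (I x rho))) /=.
      rewrite -[RHS](tpI rho) /total_map !linear_sum /=; apply: eq_bigr => x _.
      exact: (tpJ (I x rho)).
  - by move=> y rho /=; rewrite -linear_sum; apply: nd.
  - move=> x; rewrite -indI; apply/matrixP=> i j; rewrite summxE !mxE.
    under eq_bigr do rewrite mxE /=. by rewrite -linear_sum; apply: (tpJ (I x _)).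
move=> shA [G [[cpG [tniG tpG]] sumG indG]].
have [pA sA] := povmA.
have hA x : adjmx (A x) = A x := psd_herm (pA x).
exists (fun x => (kraus (A x) : linmap C n n)); split.
- split; [|split].
  + by move=> x; apply: cp_kraus.
  + move=> x rho prho /=; rewrite /kraus hA mxtrace_mulC mulmxA shA.
    pose Q := 1%:M - A x.
    have hQ : adjmx Q = Q by rewrite /Q adjmxD adjmxN adjmx1 hA.
    have QQ : Q *m Q = Q.
      by rewrite /Q mulmxBl mul1mx mulmxBr mulmx1 shA subrr subr0.
    have H := psd_tr_ge0 (psd_kraus Q prho).
    by rewrite hQ mxtrace_mulC mulmxA QQ /Q mulmxBl mul1mx linearB /= subr_ge0 in H.
  + move=> rho; rewrite /total_map linear_sum /=.
    under eq_bigr do rewrite /kraus hA mxtrace_mulC mulmxA shA.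
    by rewrite -linear_sum /= -mulmx_suml sA mul1mx.
- apply: functional_extensionality => x; apply/matrixP=> i j.
  by rewrite mxE /= /kraus hA mxtrace_mulC mulmxA shA tr_delta.
- move=> y rho; rewrite -!sumG; apply: eq_bigr => x _.
  have hPB : psd (A x - induced_povm G (x, y)).
    rewrite -indG (bigD1 y) //= addrC addrK.
    by apply: psd_sum => y' _; apply: induced_psd.
  have KLx := KL (cpG (x, y)) (tr_induced G (x, y)) hPB (hA x) (shA x).
  have KLf : forall X, G (x, y) X = (G (x, y) \o kraus (A x) : linmap C n v) X.
    apply: lin_rank1 => u w; rewrite /= /kraus hA; exact: KLx.
  rewrite /total_map linear_sum (bigD1 x) //= big1 ?addr0.
    by rewrite [RHS]KLf.
  move=> x' nx'; rewrite KLf /= /kraus !hA !mulmxA.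
  have -> : A x *m A x' = 0 by apply: (sharp_orth povmA shA); rewrite eq_sym.
  by rewrite !mul0mx linear0.
Qed.
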